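(* Let $\Lambda=(0,\infty)$ and let $\chi\colon\Lambda\to\mathbb{R}^3_+$ be continuous, bounded, with $\operatorname{supp}\chi=[0,1]$ and $\chi(\lambda)\ne\mathbf{0}$ on $(0,1)$; let $\eta=\chi/\langle\mathbf{1},\chi\rangle$ on $(0,1)$, extended continuously to $[0,1]$. Let $\mathcal{P}=\{\int\chi\,\mathrm{d}\nu:\nu$ finite nonnegative Borel measure on $\Lambda\}$ with nonempty interior, $A=\{\mathbf{x}\in\mathbb{R}^3:\langle\mathbf{x},\mathbf{1}\rangle=1\}$, $\mathcal{T}=\mathcal{P}\cap A$. If the spectral locus is convex, then for any $a<b$ in $[0,1]$, \[ \operatorname{conv}\bigl(\eta([a,b]_{\mathbb{T}})\bigr)\cap\operatorname{conv}\bigl(\eta([b,a]_{\mathbb{T}})\bigr)=[\eta(a),\eta(b)]. \]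
   Context: $[\mathbf{x},\mathbf{y}]$ denotes the closed segment between $\mathbf{x}$ and $\mathbf{y}$. $\mathcal{T}$ is regarded as a subset of the plane $A$ with its relative topology. Fix a direction and orientation in $A$; $\angle(\mathbf{c}',\mathbf{c})$ is the angle from $\mathbf{c}$ to $\mathbf{c}'$. A closed cyclic interval $[a,b]_{\mathbb{T}}\subset[0,1]$ is $[a,b]$ if $a\le b$ and $[a,1]\cup[0,b]$ if $a>b$. The spectral locus $\eta([0,1])$ is convex if $\eta([0,1])\subset\partial\mathcal{T}$ and for every $\mathbf{c}\in\operatorname{int}\mathcal{T}$ a continuous version of $\lambda\mapsto\angle(\eta(\lambda),\mathbf{c})$ is monotone on $[0,1]$ with $|\angle(\eta(0),\mathbf{c})-\angle(\eta(1),\mathbf{c})|\le 2\pi$. *)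

(* Defs.v *)
From HB Require Import structures.
From mathcomp Require Import all_boot all_order all_algebra.
From mathcomp Require Import all_classical all_reals all_analysis.
Set Implicit Arguments. Unset Strict Implicit. Unset Printing Implicit Defensive.
Import Order.TTheory GRing.Theory Num.Theory numFieldNormedType.Exports.
Local Open Scope classical_set_scope.
Local Open Scope ring_scope.

Definition vec (R : realType) := 'I_3 -> R.

Section Defs.
Variable R : realType.

Definition vadd (x y : vec R) : vec R := fun i => x i + y i.
Definition vscale (t : R) (x : vec R) : vec R := fun i => t * x i.
Definition vsub (x y : vec R) : vec R := fun i => x i - y i.
Definition vsum1 (x : vec R) : R := \sum_(i < 3) x i.
Definition vnorm (x : vec R) : R := Num.sqrt (\sum_(i < 3) x i ^+ 2).
Definition vdist (x y : vec R) : R := vnorm (vsub x y).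

Definition planeA : set (vec R) := [set x | vsum1 x = 1].

Definition Lam : set R := [set t | 0 < t].

Definition coneP (chi : 'I_3 -> R -> R) : set (vec R) :=
  [set p | exists nu : {measure set R -> \bar R},
     (nu Lam < +oo)%E /\
     forall i, p i = fine (\int[nu]_(t in Lam) (chi i t)%:E)].

Definition regT (chi : 'I_3 -> R -> R) : set (vec R) := coneP chi `&` planeA.

Definition interior3 (S : set (vec R)) : set (vec R) :=
  [set x | exists2 e : R, 0 < e & forall y, vdist y x < e -> S y].

Definition relint (S : set (vec R)) : set (vec R) :=
  [set x | planeA x /\ S x /\
     exists2 e : R, 0 < e & forall y, planeA y -> vdist y x < e -> S y].
Definition relclosure (S : set (vec R)) : set (vec R) :=
  [set x | planeA x /\ forall e : R, 0 < e -> exists2 y, S y & vdist y x < e].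
Definition relboundary (S : set (vec R)) : set (vec R) :=
  relclosure S `\` relint S.

(* fixed oriented orthonormal basis of the direction plane {<x,1> = 0} *)
Definition e1 : vec R := fun i =>
  [:: 1 / Num.sqrt 2; -1 / Num.sqrt 2; 0]`_i.
Definition e2 : vec R := fun i =>
  [:: 1 / Num.sqrt 6; 1 / Num.sqrt 6; -2 / Num.sqrt 6]`_i.

(* theta is a continuous version of lambda |-> angle(eta(lambda), c) on [0,1] *)
Definition angle_version (eta : 'I_3 -> R -> R) (c : vec R) (theta : R -> R) :=
  {within `[0, 1], continuous theta} /\
  forall l, l \in `[0, 1] ->
    exists2 r : R, 0 < r &
      forall i, eta i l - c i = r * (cos (theta l) * e1 i + sin (theta l) * e2 i).

Definition monotone_on01 (f : R -> R) :=
  {in `[0, 1] &, forall x y, x <= y -> f x <= f y} \/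
  {in `[0, 1] &, forall x y, x <= y -> f y <= f x}.

Definition convex_locus (eta : 'I_3 -> R -> R) (T : set (vec R)) :=
  (forall l, l \in `[0, 1] -> relboundary T (fun i => eta i l)) /\
  forall c, relint T c ->
    exists theta, angle_version eta c theta /\ monotone_on01 theta /\
      `|theta 0 - theta 1| <= 2 * pi.

Definition cyc_interval (a b : R) : set R :=
  if a <= b then `[a, b]%classic else (`[a, 1] `|` `[0, b])%classic.

Definition convhull (S : set (vec R)) : set (vec R) :=
  [set x | exists n (w : 'I_n -> R) (p : 'I_n -> vec R),
     (forall k, 0 <= w k) /\ \sum_(k < n) w k = 1 /\ (forall k, S (p k)) /\
     forall i, x i = \sum_(k < n) w k * p k i].

Definition segment (x y : vec R) : set (vec R) :=
  [set z | exists2 t : R, t \in `[0, 1] & forall i, z i = (1 - t) * x i + t * y i].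

Definition curve_image (eta : 'I_3 -> R -> R) (I : set R) : set (vec R) :=
  [set x | exists2 l, I l & x = (fun i => eta i l)].

End Defs.

(* Main.v *)
Require Import Defs.
From HB Require Import structures.
From mathcomp Require Import all_boot all_order all_algebra.
From mathcomp Require Import all_classical all_reals all_analysis.
From mathcomp Require Import ring lra measurable_realfun.
Import Order.TTheory GRing.Theory Num.Theory numFieldNormedType.Exports.
Local Open Scope classical_set_scope.
Local Open Scope ring_scope.

Section Trig.
Variable R : realType.
Implicit Types x : R.

Lemma sin_le0_pi2 x : pi <= x <= 2 * pi -> sin x <= 0.
Proof.
move=> /andP[h1 h2].
have -> : x = (x - pi) + pi by rewrite subrK.
rewrite sinDpi oppr_le0; apply: sin_ge0_pi; apply/andP; split; lra.
Qed.

Lemma sin_lt0_pi2 x : pi < x < 2 * pi -> sin x < 0.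
Proof.
move=> /andP[h1 h2].
have -> : x = (x - pi) + pi by rewrite subrK.
rewrite sinDpi oppr_lt0; apply: sin_gt0_pi; apply/andP; split; lra.
Qed.

Lemma sin_pos_range x : 0 <= x <= 2 * pi -> 0 < sin x -> x < pi.
Proof.
move=> /andP[h1 h2] hs; rewrite ltNge; apply/negP => hp.
have := @sin_le0_pi2 x; rewrite hp h2 /= => /(_ isT); lra.
Qed.

Lemma sin_neg_range x : 0 <= x <= 2 * pi -> sin x < 0 -> pi < x.
Proof.
move=> /andP[h1 h2] hs; rewrite ltNge; apply/negP => hp.
have := @sin_ge0_pi R x; rewrite hp h1 /= => /(_ isT); lra.
Qed.

Lemma sin_eq0_range x : 0 <= x <= 2 * pi -> sin x = 0 -> x = 0 \/ x = pi \/ x = 2 * pi.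
Proof.
move=> /andP[h1 h2] hs.
have pi0 := pi_gt0 R.
case: (ltgtP x 0) => [|h0|->]; [lra| |by left].
case: (ltgtP x pi) => [hl|hg|->]; last by right; left.
  by have := @sin_gt0_pi R x; rewrite hl h0 /= => /(_ isT); lra.
case: (ltgtP x (2 * pi)) => [hl2|hg2|->]; [|lra|by right; right].
by have := @sin_lt0_pi2 x; rewrite hl2 hg /= => /(_ isT); lra.
Qed.

Lemma sin2pi_per x : sin (x + 2 * pi) = sin x.
Proof. by rewrite -(@sinD2pi R x) mulr_natl. Qed.
Lemma cos2pi_per x : cos (x + 2 * pi) = cos x.
Proof. by rewrite -(@cosD2pi R x) mulr_natl. Qed.


Lemma sinBpi x : sin (x - pi) = - sin x.
Proof. by rewrite -[in RHS](subrK pi x) sinDpi opprK. Qed.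
Lemma cosBpi x : cos (x - pi) = - cos x.
Proof. by rewrite -[in RHS](subrK pi x) cosDpi opprK. Qed.

Lemma cross_sin (r1 r2 u v : R) :
  r1 * cos u * (r2 * sin v) - r1 * sin u * (r2 * cos v) = r1 * r2 * sin (v - u).
Proof. rewrite sinB; ring. Qed.

End Trig.


Lemma sum_lin (R : realType) n (w x y : 'I_n -> R) (c1 c2 c3 : R) :
  \sum_(k < n) (c1 * (w k * x k) + c2 * (w k * y k) + c3 * w k) =
  c1 * \sum_(k < n) w k * x k + c2 * \sum_(k < n) w k * y k + c3 * \sum_(k < n) w k.
Proof. by rewrite !big_split /= -!mulr_sumr. Qed.

Lemma seg_comb (R : realType) n (w zx zy : 'I_n -> R) (px py qx qy : R) :
  (forall k, 0 <= w k) -> \sum_(k < n) w k = 1 ->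
  (forall k, w k != 0 -> exists t, 0 <= t <= 1 /\
     zx k = (1 - t) * px + t * qx /\ zy k = (1 - t) * py + t * qy) ->
  exists t, 0 <= t <= 1 /\
    \sum_(k < n) w k * zx k = (1 - t) * px + t * qx /\
    \sum_(k < n) w k * zy k = (1 - t) * py + t * qy.
Proof.
move=> w0 w1 hk.
have : forall k, exists t, 0 <= t <= 1 /\
  w k * zx k = w k * ((1 - t) * px + t * qx) /\ w k * zy k = w k * ((1 - t) * py + t * qy).
  move=> k; have [/eqP wk0|wkn] := boolP (w k == 0).
    by exists 0; rewrite wk0 !mul0r lexx ler01.
  have [t [ht [ex ey]]] := hk k wkn.
  by exists t; rewrite ex ey.
move=> /choice [tf htf].
exists (\sum_(k < n) w k * tf k); split.
  apply/andP; split.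
    by apply: sumr_ge0 => k _; apply: mulr_ge0 => //; have [/andP[]] := htf k.
  rewrite -w1; apply: ler_sum => k _.
  have [/andP[t0 t1] _] := htf k.
  by rewrite -[leRHS]mulr1 ler_wpM2l.
split.
  rewrite (eq_bigr (fun k => px * w k + (qx - px) * (w k * tf k))); last first.
    by move=> k _; have [_ [-> _]] := htf k; ring.
  by rewrite big_split /= -!mulr_sumr w1; ring.
rewrite (eq_bigr (fun k => py * w k + (qy - py) * (w k * tf k))); last first.
  by move=> k _; have [_ [_ ->]] := htf k; ring.
by rewrite big_split /= -!mulr_sumr w1; ring.
Qed.

Section Core.
Variables (R : realType) (X Y r phi : R -> R) (a b : R).
Hypothesis hpol : forall {l : R}, 0 <= l <= 1 ->
  0 < r l /\ X l = r l * cos (phi l) /\ Y l = r l * sin (phi l).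
Hypothesis hmono : forall {x y : R}, 0 <= x -> x <= y -> y <= 1 -> phi x <= phi y.
Hypothesis hrange : phi 1 - phi 0 <= 2 * pi.
Hypothesis H : forall l l1 l2, 0 <= l <= 1 -> 0 <= l1 <= 1 -> 0 <= l2 <= 1 ->
  forall mu nu, 0 <= mu -> 0 <= nu -> mu + nu < 1 ->
  X l = mu * X l1 + nu * X l2 -> Y l = mu * Y l1 + nu * Y l2 -> False.
Hypothesis ha : 0 <= a.
Hypothesis hab : a < b.
Hypothesis hb : b <= 1.

Ltac slra := have := ha; have := hab; have := hb; have := hrange; intros; lra.

Let A := phi b - phi a.
Let pa := phi a.

Definition arc1 l := a <= l <= b.
Definition arc2 l := (b <= l <= 1) \/ (0 <= l <= a).

Lemma A_range : 0 <= A <= 2 * pi.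
Proof.
have h1 := hmono ha (ltW hab) hb.
have a1 : a <= 1 by slra.
have h2 := hmono (le_refl 0) ha a1.
have b0 : 0 <= b by slra.
have h3 := hmono b0 hb (le_refl 1).
rewrite /A; apply/andP; split; slra.
Qed.

Lemma arc1_01 {l} : arc1 l -> 0 <= l <= 1.
Proof. by move=> /andP[h1 h2]; apply/andP; split; slra. Qed.
Lemma arc2_01 {l} : arc2 l -> 0 <= l <= 1.
Proof. by case=> /andP[h1 h2]; apply/andP; split; slra. Qed.
Lemma a01 : 0 <= a <= 1. Proof. by apply/andP; split; slra. Qed.
Lemma b01 : 0 <= b <= 1. Proof. by apply/andP; split; slra. Qed.

Lemma arc1_polar {l} : arc1 l -> exists B, 0 <= B <= A /\
  X l = r l * cos (pa + B) /\ Y l = r l * sin (pa + B).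
Proof.
move=> hl; have /andP[h1 h2] := hl.
have [_ [hx hy]] := hpol (arc1_01 hl).
exists (phi l - pa); have -> : pa + (phi l - pa) = phi l by rewrite addrC subrK.
  split => //.
have := hmono ha h1 (le_trans h2 hb).
have := hmono (le_trans ha h1) h2 hb.
rewrite /A /pa => e1 e2; apply/andP; split; slra.
Qed.

Lemma arc2_polar {l} : arc2 l -> exists B, A <= B <= 2 * pi /\
  X l = r l * cos (pa + B) /\ Y l = r l * sin (pa + B).
Proof.
have a1 : a <= 1 by slra.
have b0 : 0 <= b by slra.
have h0 := hmono (le_refl 0) ha a1.
have h3 := hmono b0 hb (le_refl 1).
have h4 := hmono ha (ltW hab) hb.
move=> hl; have [_ [hx hy]] := hpol (arc2_01 hl).
case: hl => /andP[l1 l2].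
  exists (phi l - pa); have -> : pa + (phi l - pa) = phi l by rewrite addrC subrK.
  split => //.
  have := hmono b0 l1 l2.
  have := hmono (le_trans b0 l1) l2 (le_refl 1).
  rewrite /A /pa => e1 e2; apply/andP; split; slra.
exists (phi l + 2 * pi - pa); have -> : pa + (phi l + 2 * pi - pa) = phi l + 2 * pi by rewrite addrC subrK.
rewrite cos2pi_per sin2pi_per; split => //.
have := hmono (le_refl 0) l1 (le_trans l2 a1).
have := hmono l1 l2 a1.
rewrite /A /pa => e1 e2; apply/andP; split; slra.
Qed.

Definition Lc := X a * Y b - Y a * X b.
Definition La l := X b * Y l - Y b * X l.
Definition Lb l := X l * Y a - Y l * X a.
Definition Lf x y := (X b * y - Y b * x) + (x * Y a - y * X a) + Lc.

Lemma identX l : La l * X a + Lb l * X b + Lc * X l = 0.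
Proof. rewrite /La /Lb /Lc; ring. Qed.
Lemma identY l : La l * Y a + Lb l * Y b + Lc * Y l = 0.
Proof. rewrite /La /Lb /Lc; ring. Qed.

Lemma solve_lin {al be ga x1 x2 x3 : R} : ga != 0 ->
  al * x1 + be * x2 + ga * x3 = 0 -> x3 = (- al / ga) * x1 + (- be / ga) * x2.
Proof.
move=> gne e.
have e' : ga * x3 = - al * x1 - be * x2 by lra.
have -> : x3 = (ga * x3) / ga by field.
rewrite e'; field => //.
Qed.

Lemma viol {l1 l2 l3 al be ga} : 0 <= l1 <= 1 -> 0 <= l2 <= 1 -> 0 <= l3 <= 1 ->
  al * X l1 + be * X l2 + ga * X l3 = 0 -> al * Y l1 + be * Y l2 + ga * Y l3 = 0 ->
  0 < ga -> al <= 0 -> be <= 0 -> 0 < al + be + ga -> False.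
Proof.
move=> h1 h2 h3 ex ey gp alp bep sp.
have gne : ga != 0 by rewrite gt_eqF.
apply: (H l3 l1 l2 h3 h1 h2 (- al / ga) (- be / ga)).
- by apply: divr_ge0; lra.
- by apply: divr_ge0; lra.
- rewrite -mulrDl ltr_pdivrMr // mul1r; lra.
- exact: solve_lin ex.
- exact: solve_lin ey.
Qed.

Lemma pol_a : 0 < r a /\ X a = r a * cos pa /\ Y a = r a * sin pa.
Proof. exact: hpol a01. Qed.
Lemma pol_b : 0 < r b /\ X b = r b * cos (pa + A) /\ Y b = r b * sin (pa + A).
Proof.
have -> : pa + A = phi b by rewrite /pa /A addrC subrK.
exact: hpol b01.
Qed.

Lemma Lc_trig : Lc = r a * r b * sin A.
Proof.
have [_ [xa ya]] := pol_a; have [_ [xb yb]] := pol_b.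
rewrite /Lc xa ya xb yb cross_sin; congr (_ * sin _); rewrite /A; ring.
Qed.

Lemma La_trig {l rz B} : X l = rz * cos (pa + B) -> Y l = rz * sin (pa + B) ->
  La l = r b * rz * sin (B - A).
Proof.
move=> xl yl; have [_ [xb yb]] := pol_b.
rewrite /La xl yl xb yb cross_sin; congr (_ * sin _); ring.
Qed.

Lemma Lb_trig {l rz B} : X l = rz * cos (pa + B) -> Y l = rz * sin (pa + B) ->
  Lb l = - (rz * r a * sin B).
Proof.
move=> xl yl; have [_ [xa ya]] := pol_a.
rewrite /Lb xl yl xa ya cross_sin.
have -> : pa - (pa + B) = - B by ring.
by rewrite sinN mulrN.
Qed.

Lemma pmul3_gt0 (p q u : R) : 0 < p -> 0 < q -> (0 < p * q * u) = (0 < u).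
Proof. by move=> hp hq; rewrite pmulr_rgt0 // mulr_gt0. Qed.
Lemma pmul3_lt0 (p q u : R) : 0 < p -> 0 < q -> (p * q * u < 0) = (u < 0).
Proof. by move=> hp hq; rewrite pmulr_rlt0 // mulr_gt0. Qed.

Lemma claim1 l : arc1 l -> La l + Lb l + Lc <= 0.
Proof.
move=> hl; have [B [/andP[B0 BA] [xl yl]]] := arc1_polar hl.
have rz := (hpol (arc1_01 hl)).1.
have [ra0 _] := pol_a; have [rb0 _] := pol_b.
have /andP[A0 A2] := A_range.
have pi0 := @pi_gt0 R.
have f1 : 0 < La l -> pi < A - B.
  rewrite (La_trig xl yl) pmul3_gt0 // => h.
  apply: sin_neg_range; first by apply/andP; split; lra.
  by rewrite -[A - B]opprB sinN oppr_lt0.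
have f2 : 0 < Lb l -> pi < B.
  rewrite (Lb_trig xl yl) oppr_gt0 pmul3_lt0 // => h.
  by apply: sin_neg_range => //; apply/andP; split; lra.
have f3 : 0 < Lc -> A < pi.
  rewrite Lc_trig pmul3_gt0 // => h.
  by apply: sin_pos_range => //; apply/andP; split; lra.
have hl1 := arc1_01 hl.
rewrite leNgt; apply/negP => hpos.
case: (ltP 0 Lc) => hc.
  have hA : La l <= 0 by case: (ltP 0 (La l)) => // /f1; have := f3 hc; lra.
  have hB : Lb l <= 0 by case: (ltP 0 (Lb l)) => // /f2; have := f3 hc; lra.
  by apply: (viol a01 b01 hl1 (identX l) (identY l)).
case: (ltP 0 (La l)) => hA.
  have hB : Lb l <= 0 by case: (ltP 0 (Lb l)) => // /f2; have := f1 hA; lra.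
  apply: (viol b01 hl1 a01 (al := Lb l) (be := Lc) (ga := La l)) => //; last by lra.
    by rewrite -(identX l); ring.
  by rewrite -(identY l); ring.
case: (ltP 0 (Lb l)) => hB; last by lra.
apply: (viol a01 hl1 b01 (al := La l) (be := Lc) (ga := Lb l)) => //; last by lra.
  by rewrite -(identX l); ring.
by rewrite -(identY l); ring.
Qed.

Lemma claim2 l : arc2 l -> 0 <= La l + Lb l + Lc.
Proof.
move=> hl; have [B [/andP[AB B2] [xl yl]]] := arc2_polar hl.
have rz := (hpol (arc2_01 hl)).1.
have [ra0 _] := pol_a; have [rb0 _] := pol_b.
have /andP[A0 A2] := A_range.
have pi0 := @pi_gt0 R.
have g1 : La l < 0 -> pi < B - A.
  rewrite (La_trig xl yl) pmul3_lt0 // => h.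
  by apply: sin_neg_range => //; apply/andP; split; lra.
have g2 : Lb l < 0 -> B < pi.
  rewrite (Lb_trig xl yl) oppr_lt0 pmul3_gt0 // => h.
  by apply: sin_pos_range => //; apply/andP; split; lra.
have g3 : Lc < 0 -> pi < A.
  rewrite Lc_trig pmul3_lt0 // => h.
  by apply: sin_neg_range => //; apply/andP; split; lra.
have hl1 := arc2_01 hl.
rewrite leNgt; apply/negP => hneg.
case: (ltP Lc 0) => hc.
  have hA : 0 <= La l by case: (ltP (La l) 0) => // /g1; have := g3 hc; lra.
  have hB : 0 <= Lb l by case: (ltP (Lb l) 0) => // /g2; have := g3 hc; lra.
  apply: (viol a01 b01 hl1 (al := - La l) (be := - Lb l) (ga := - Lc)); try lra.
    by rewrite -[RHS]oppr0 -(identX l); ring.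
  by rewrite -[RHS]oppr0 -(identY l); ring.
case: (ltP (La l) 0) => hA.
  have hB : 0 <= Lb l by case: (ltP (Lb l) 0) => // /g2; have := g1 hA; lra.
  apply: (viol b01 hl1 a01 (al := - Lb l) (be := - Lc) (ga := - La l)); try lra.
    by rewrite -[RHS]oppr0 -(identX l); ring.
  by rewrite -[RHS]oppr0 -(identY l); ring.
case: (ltP (Lb l) 0) => hB; last by lra.
apply: (viol a01 hl1 b01 (al := - La l) (be := - Lc) (ga := - Lb l)); try lra.
  by rewrite -[RHS]oppr0 -(identX l); ring.
by rewrite -[RHS]oppr0 -(identY l); ring.
Qed.

Definition seg l := exists t, 0 <= t <= 1 /\
  X l = (1 - t) * X a + t * X b /\ Y l = (1 - t) * Y a + t * Y b.

Lemma ray {l1 l2 r1 r2 psi} : 0 <= l1 <= 1 -> 0 <= l2 <= 1 -> 0 < r1 -> 0 < r2 ->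
  X l1 = r1 * cos psi -> Y l1 = r1 * sin psi ->
  X l2 = r2 * cos psi -> Y l2 = r2 * sin psi -> X l1 = X l2 /\ Y l1 = Y l2.
Proof.
move=> h1 h2 r1p r2p x1 y1 x2 y2.
have r1n : r1 != 0 by rewrite gt_eqF.
have r2n : r2 != 0 by rewrite gt_eqF.
case: (ltgtP r1 r2) => hr.
- exfalso; apply: (H l1 l2 l2 h1 h2 h2 (r1 / r2) 0).
  + by apply: divr_ge0; lra.
  + by [].
  + by rewrite addr0 ltr_pdivrMr // mul1r.
  + by rewrite x1 x2; field.
  + by rewrite y1 y2; field.
- exfalso; apply: (H l2 l1 l1 h2 h1 h1 (r2 / r1) 0).
  + by apply: divr_ge0; lra.
  + by [].
  + by rewrite addr0 ltr_pdivrMr // mul1r.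
  + by rewrite x1 x2; field.
  + by rewrite y1 y2; field.
- by rewrite x1 x2 y1 y2 hr.
Qed.

Lemma seg_a l : X l = X a -> Y l = Y a -> seg l.
Proof. move=> e1 e2; exists 0; rewrite e1 e2; split; [by rewrite lexx ler01 | split; ring]. Qed.
Lemma seg_b l : X l = X b -> Y l = Y b -> seg l.
Proof. move=> e1 e2; exists 1; rewrite e1 e2; split; [by rewrite lexx ler01 | split; ring]. Qed.

Lemma segI l : Lc != 0 -> La l + Lb l + Lc = 0 -> 0 <= - Lb l / Lc <= 1 -> seg l.
Proof.
move=> cn hs ht; exists (- Lb l / Lc); split => //.
have e : La l = - Lb l - Lc by lra.
split.
  rewrite (solve_lin cn (identX l)) e; field => //.
rewrite (solve_lin cn (identY l)) e; field => //.
Qed.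

Lemma sides : (forall l, arc1 l -> La l + Lb l + Lc = 0 -> seg l) \/
              (forall l, arc2 l -> La l + Lb l + Lc = 0 -> seg l).
Proof.
have [ra0 [xa ya]] := pol_a; have [rb0 [xb yb]] := pol_b.
have /andP[A0 A2] := A_range.
have pi0 := @pi_gt0 R.
case: (ltgtP Lc 0) => hc.
- right => l hl hL.
  have [B [/andP[AB B2] [xl yl]]] := arc2_polar hl.
  have rz := (hpol (arc2_01 hl)).1.
  have hA : pi < A.
    move: hc; rewrite Lc_trig pmul3_lt0 // => h.
    by apply: sin_neg_range => //; apply/andP; split; lra.
  have hLa : 0 <= La l.
    rewrite (La_trig xl yl) mulr_ge0 // ?mulr_ge0 //; try lra.
    by apply: sin_ge0_pi; apply/andP; split; lra.
  have hLb : 0 <= Lb l.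
    rewrite (Lb_trig xl yl) oppr_ge0 mulr_ge0_le0 // ?mulr_ge0 //; try lra.
    by apply: sin_le0_pi2; apply/andP; split; lra.
  apply: segI => //; first by rewrite lt_eqF.
  apply/andP; split.
    by apply: mulr_le0; [lra | rewrite invr_le0 ltW].
  by rewrite ler_ndivrMr // mul1r; lra.
- left => l hl hL.
  have [B [/andP[B0 BA] [xl yl]]] := arc1_polar hl.
  have rz := (hpol (arc1_01 hl)).1.
  have hA : A < pi.
    move: hc; rewrite Lc_trig pmul3_gt0 // => h.
    by apply: sin_pos_range => //; apply/andP; split; lra.
  have hLa : La l <= 0.
    rewrite (La_trig xl yl) -[B - A]opprB sinN mulrN oppr_le0 mulr_ge0 // ?mulr_ge0 //; try lra.
    by apply: sin_ge0_pi; apply/andP; split; lra.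
  have hLb : Lb l <= 0.
    rewrite (Lb_trig xl yl) oppr_le0 mulr_ge0 // ?mulr_ge0 //; try lra.
    by apply: sin_ge0_pi; apply/andP; split; lra.
  apply: segI => //; first by rewrite gt_eqF.
  apply/andP; split.
    by apply: divr_ge0; lra.
  by rewrite ler_pdivrMr // mul1r; lra.
- have sA : sin A = 0.
    have : r a * r b * sin A = 0 by rewrite -Lc_trig.
    by move/eqP; rewrite !mulf_eq0 (gt_eqF ra0) (gt_eqF rb0) /= => /eqP.
  have [A0'|[Api|A2pi]] := @sin_eq0_range R A A_range sA.
  + left => l hl _.
    have [B [/andP[B0 BA] [xl yl]]] := arc1_polar hl.
    have rz := (hpol (arc1_01 hl)).1.
    have B0' : B = 0 by lra.
    rewrite B0' addr0 in xl yl.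
    have [e1 e2] := ray (arc1_01 hl) a01 rz ra0 xl yl xa ya.
    exact: seg_a.
  + left => l hl hL.
    have [B [/andP[B0 BA] [xl yl]]] := arc1_polar hl.
    have rz := (hpol (arc1_01 hl)).1.
    have : sin B = 0.
      move: hL; rewrite (La_trig xl yl) (Lb_trig xl yl) hc Api sinBpi addr0.
      move=> h; have : (r b + r a) * r l * sin B = 0 by lra.
      have rab : 0 < r b + r a by rewrite addr_gt0.
      by move/eqP; rewrite !mulf_eq0 (gt_eqF rab) (gt_eqF rz) /= => /eqP.
    move=> sB.
    have hB2 : 0 <= B <= 2 * pi by apply/andP; split; lra.
    have [B0'|[Bpi|B2pi]] := @sin_eq0_range R B hB2 sB.
    * rewrite B0' addr0 in xl yl.
      have [e1 e2] := ray (arc1_01 hl) a01 rz ra0 xl yl xa ya.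
      exact: seg_a.
    * rewrite Bpi -Api in xl yl.
      have [e1 e2] := ray (arc1_01 hl) b01 rz rb0 xl yl xb yb.
      exact: seg_b.
    * exfalso; lra.
  + right => l hl _.
    have [B [/andP[AB B2] [xl yl]]] := arc2_polar hl.
    have rz := (hpol (arc2_01 hl)).1.
    have B2' : B = 2 * pi by lra.
    rewrite B2' cos2pi_per sin2pi_per in xl yl.
    have [e1 e2] := ray (arc2_01 hl) a01 rz ra0 xl yl xa ya.
    exact: seg_a.
Qed.

Lemma Lsum {n} (w lk : 'I_n -> R) : \sum_(k < n) w k = 1 ->
  \sum_(k < n) w k * (La (lk k) + Lb (lk k) + Lc) =
  (Y a - Y b) * \sum_(k < n) w k * X (lk k) + (X b - X a) * \sum_(k < n) w k * Y (lk k) + Lc.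
Proof.
move=> w1.
rewrite (eq_bigr (fun k => (Y a - Y b) * (w k * X (lk k)) + (X b - X a) * (w k * Y (lk k)) + Lc * w k)).
  by rewrite sum_lin w1 mulr1.
by move=> k _; rewrite /La /Lb; ring.
Qed.

Lemma core_main n (w lk : 'I_n -> R) m (v lj : 'I_m -> R) :
  (forall k, 0 <= w k) -> \sum_(k < n) w k = 1 -> (forall k, arc1 (lk k)) ->
  (forall j, 0 <= v j) -> \sum_(j < m) v j = 1 -> (forall j, arc2 (lj j)) ->
  \sum_(k < n) w k * X (lk k) = \sum_(j < m) v j * X (lj j) ->
  \sum_(k < n) w k * Y (lk k) = \sum_(j < m) v j * Y (lj j) ->
  exists t, 0 <= t <= 1 /\
    \sum_(k < n) w k * X (lk k) = (1 - t) * X a + t * X b /\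
    \sum_(k < n) w k * Y (lk k) = (1 - t) * Y a + t * Y b.
Proof.
move=> w0 w1 hk v0 v1 hj ex ey.
have S1 := Lsum w lk w1; have S2 := Lsum v lj v1.
rewrite -ex -ey -S1 in S2.
have le1 : \sum_(k < n) w k * (La (lk k) + Lb (lk k) + Lc) <= 0.
  by rewrite -oppr_ge0 -sumrN; apply: sumr_ge0 => k _; rewrite oppr_ge0 mulr_ge0_le0 // claim1.
have ge2 : 0 <= \sum_(j < m) v j * (La (lj j) + Lb (lj j) + Lc).
  by apply: sumr_ge0 => j _; rewrite mulr_ge0 // claim2.
have Z1 : \sum_(k < n) w k * (La (lk k) + Lb (lk k) + Lc) = 0 by lra.
have Z2 : \sum_(j < m) v j * (La (lj j) + Lb (lj j) + Lc) = 0 by lra.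
case: sides => side.
  apply: seg_comb => // k wk.
  have : - (w k * (La (lk k) + Lb (lk k) + Lc)) = 0.
    apply: (psumr_eq0P (P := predT) (F := fun i => - (w i * (La (lk i) + Lb (lk i) + Lc)))) => //.
      by move=> i _; rewrite oppr_ge0 mulr_ge0_le0 // claim1.
    by rewrite sumrN Z1 oppr0.
  move/eqP; rewrite oppr_eq0 mulf_eq0 (negbTE wk) /= => /eqP hL.
  exact: side.
rewrite ex ey.
apply: seg_comb => // j vj.
have : v j * (La (lj j) + Lb (lj j) + Lc) = 0.
  apply: (psumr_eq0P (P := predT) (F := fun i => v i * (La (lj i) + Lb (lj i) + Lc))) => //.
  by move=> i _; rewrite mulr_ge0 // claim2.
move/eqP; rewrite mulf_eq0 (negbTE vj) /= => /eqP hL.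
exact: side.
Qed.

End Core.

Lemma Lam_itv (R : realType) : (@Lam R) = `]0, +oo[%classic.
Proof. by apply/seteqP; split => x; rewrite /= in_itv /= andbT. Qed.

Lemma Lam_meas (R : realType) : measurable ((@Lam R)).
Proof. by rewrite Lam_itv; exact: measurable_itv. Qed.

Lemma chi_meas (R : realType) (f : R -> R) :
  {in `]0, +oo[, continuous f} -> measurable_fun (@Lam R) (EFin \o f).
Proof.
move=> cf; apply/measurable_EFinP.
apply: open_continuous_measurable_fun; first by rewrite Lam_itv; exact: rray_open.
by move=> x; rewrite inE /= => hx; apply: cf; rewrite in_itv /= andbT.
Qed.

Lemma integral_fin (R : realType) (f : R -> R) (M : R) (nu : {measure set R -> \bar R}) :
  {in `]0, +oo[, continuous f} -> (forall t, 0 < t -> 0 <= f t) ->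
  (forall t, 0 < t -> `|f t| <= M) -> (nu ((@Lam R)) < +oo)%E ->
  ((0 <= \int[nu]_(t in (@Lam R)) (f t)%:E) /\
  \int[nu]_(t in (@Lam R)) (f t)%:E \is a fin_num)%E.
Proof.
move=> cf f0 fM nufin.
have i0 : (0 <= \int[nu]_(t in (@Lam R)) (f t)%:E)%E.
  by apply: integral_ge0 => t ht; rewrite lee_fin f0.
split => //; rewrite ge0_fin_numE //.
apply: (le_lt_trans (y := (\int[nu]_(t in (@Lam R)) (cst M%:E t))%E)).
  apply: ge0_le_integral => //.
  all: try (by exact: Lam_meas).
  all: try (by exact: chi_meas).
  all: try (by move=> t ht; rewrite lee_fin f0).
  all: try (by move=> t ht; rewrite lee_fin (le_trans (ler_norm _)) // fM).
rewrite integral_cst; last exact: Lam_meas.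
have M0 : 0 <= M.
  by apply: le_trans (fM 1 ltr01); exact: normr_ge0.
by apply: lte_mul_pinfty => //; rewrite lee_fin.
Qed.

Lemma coneP_comb (R : realType) (chi : 'I_3 -> R -> R) (M : R)
  (chi_nneg : forall i (t : R), 0 < t -> 0 <= chi i t)
  (chi_cont : forall i, {in `]0, +oo[, continuous (chi i)})
  (chi_bdd : forall i (t : R), 0 < t -> `|chi i t| <= M)
  (p1 p2 : vec R) (k1 k2 : R) : 0 <= k1 -> 0 <= k2 ->
  coneP chi p1 -> coneP chi p2 -> coneP chi (fun i => k1 * p1 i + k2 * p2 i).
Proof.
move=> k10 k20 [nu1 [f1 e1]] [nu2 [f2 e2]].
pose n1 := mscale (NngNum k10) nu1.
pose n2 := mscale (NngNum k20) nu2.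
exists (measure_add n1 n2); split.
  rewrite /measure_add/= /msum 2!big_ord_recl/= big_ord0 adde0.
  rewrite /n1 /n2 /mscale /=.
  by apply: lte_add_pinfty; apply: lte_mul_pinfty.
move=> i.
rewrite ge0_integral_measure_add; [|exact: Lam_meas| |exact: chi_meas].
  2: by move=> t ht; rewrite lee_fin chi_nneg.
rewrite !ge0_integral_mscale; [|exact: Lam_meas|exact: chi_meas| |exact: Lam_meas|exact: chi_meas|].
  2,3: by move=> t ht; rewrite lee_fin chi_nneg.
have [_ fin1] := @integral_fin R (chi i) M nu1 (chi_cont i) (chi_nneg i) (chi_bdd i) f1.
have [_ fin2] := @integral_fin R (chi i) M nu2 (chi_cont i) (chi_nneg i) (chi_bdd i) f2.
rewrite fineD ?fin_numM // !fineM // e1 e2 //.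
Qed.

Definition o0 : 'I_3 := @Ordinal 3 0 isT.
Definition o1 : 'I_3 := @Ordinal 3 1 isT.
Definition o2 : 'I_3 := @Ordinal 3 2 isT.

Lemma ord3_cases (i : 'I_3) : i = o0 \/ i = o1 \/ i = o2.
Proof.
case: i => [[|[|[|k]]] hk].
- by left; apply/val_inj.
- by right; left; apply/val_inj.
- by right; right; apply/val_inj.
- by [].
Qed.

Lemma sum3 (R : realType) (f : 'I_3 -> R) : \sum_(i < 3) f i = f o0 + f o1 + f o2.
Proof.
rewrite !big_ord_recl big_ord0 addr0 addrA.
congr (f _ + f _ + f _); exact/val_inj.
Qed.

Section Vec.
Variable R : realType.

Lemma vdist_lt (x y : vec R) (e : R) : 0 < e ->
  (vdist y x < e) = (\sum_(i < 3) (y i - x i) ^+ 2 < e ^+ 2).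
Proof.
move=> e0; rewrite /vdist /vnorm /vsub -{1}(ger0_norm (ltW e0)) -sqrtr_sqr.
by rewrite ltr_sqrt // exprn_gt0.
Qed.

Lemma vdist_coord {x y : vec R} {e : R} : vdist y x < e -> forall i, `|y i - x i| < e.
Proof.
move=> h i.
have e0 : 0 < e by apply: le_lt_trans h; exact: sqrtr_ge0.
move: h; rewrite vdist_lt // sum3 => h.
have q0 := sqr_ge0 (y o0 - x o0); have q1 := sqr_ge0 (y o1 - x o1);
have q2 := sqr_ge0 (y o2 - x o2).
have hi : (y i - x i) ^+ 2 < e ^+ 2.
  by case: (ord3_cases i) => [->|[->|->]]; lra.
rewrite ltr_norml; apply/andP; split; nra.
Qed.

Lemma coord_vdist (x y : vec R) (e : R) : 0 < e -> (forall i, `|y i - x i| <= e / 2) ->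
  vdist y x < e.
Proof.
move=> e0 h; rewrite vdist_lt // sum3.
have b i : (y i - x i) ^+ 2 <= (e / 2) ^+ 2.
  have := h i; rewrite ler_norml => /andP[h1 h2]; nra.
have := b o0; have := b o1; have := b o2.
have : (e / 2) ^+ 2 = e ^+ 2 / 4 by field.
move=> ->; nra.
Qed.

Lemma vdist_refl (x : vec R) (e : R) : 0 < e -> vdist x x < e.
Proof. move=> e0; apply: coord_vdist => // i; rewrite subrr normr0; lra. Qed.

Lemma planeA_comb (x y : vec R) (k1 k2 : R) :
  vsum1 (fun i => k1 * x i + k2 * y i) = k1 * vsum1 x + k2 * vsum1 y.
Proof. by rewrite /vsum1 !sum3; ring. Qed.


Lemma relint_comb (S : set (vec R))
  (hcone : forall p1 p2 k1 k2, 0 <= k1 -> 0 <= k2 -> S p1 -> S p2 ->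
     S (fun i => k1 * p1 i + k2 * p2 i))
  (c y1 y2 : vec R) (lam mu nu : R) :
  relint (S `&` @planeA R) c -> relclosure (S `&` @planeA R) y1 -> relclosure (S `&` @planeA R) y2 ->
  0 < lam -> 0 <= mu -> 0 <= nu -> lam + mu + nu = 1 ->
  relint (S `&` @planeA R) (fun i => lam * c i + mu * y1 i + nu * y2 i).
Proof.
move=> [pc [Tc [eps eps0 hball]]] [py1 hy1] [py2 hy2] l0 m0 n0 hs.
set z := fun i => lam * c i + mu * y1 i + nu * y2 i.
have ez : vsum1 z = lam * vsum1 c + mu * vsum1 y1 + nu * vsum1 y2.
  by rewrite /z /vsum1 !sum3; ring.
have pz : planeA z by rewrite /planeA /= ez pc py1 py2; lra.
pose del := lam * eps / 8.
have d0 : 0 < del by rewrite /del; apply: divr_gt0 => //; apply: mulr_gt0.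
have [y1' [Sy1' Py1'] d1] := hy1 del d0.
have [y2' [Sy2' Py2'] d2] := hy2 del d0.
have claim : forall w, planeA w -> vdist w z < del -> (S `&` @planeA R) w.
  move=> w pw dw.
  pose c2 := fun i => (w i - mu * y1' i - nu * y2' i) / lam.
  have ln : lam != 0 by rewrite gt_eqF.
  have pc2 : planeA c2.
    rewrite /planeA /= in pw Py1' Py2' *.
    have -> : vsum1 c2 = (vsum1 w - mu * vsum1 y1' - nu * vsum1 y2') / lam.
      by rewrite /c2 /vsum1 !sum3; field.
    rewrite pw Py1' Py2'.
    have -> : 1 - mu * 1 - nu * 1 = lam * 1 by lra.
    by field.
  have dc2 : vdist c2 c < eps.
    apply: coord_vdist => // i.
    have := vdist_coord dw i; have := vdist_coord d1 i; have := vdist_coord d2 i.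
    rewrite !ltr_norml => /andP[a1 a2] /andP[b1 b2] /andP[e1' e2'].
    have -> : c2 i - c i = ((w i - z i) - mu * (y1' i - y1 i) - nu * (y2' i - y2 i)) / lam.
      by rewrite /c2 /z; field.
    have m1 : mu <= 1 by lra.
    have n1 : nu <= 1 by lra.
    set N := (w i - z i) - mu * (y1' i - y1 i) - nu * (y2' i - y2 i).
    have hN : `|N| <= 3 * del.
      rewrite ler_norml; apply/andP; split; rewrite /N; nra.
    rewrite normrM normfV (gtr0_norm l0) ler_pdivrMr //.
    apply: (le_trans hN); rewrite /del.
    have -> : 3 * (lam * eps / 8) = (3 / 8) * (lam * eps) by field.
    have -> : eps / 2 * lam = (1 / 2) * (lam * eps) by field.
    apply: ler_wpM2r; first by apply: mulr_ge0; lra.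
    lra.
  have Sc2 : S c2 by have [] := hball c2 pc2 dc2.
  split => //.
  have -> : w = (fun i => 1 * (lam * c2 i + mu * y1' i) + nu * y2' i).
    by apply/funext => i; rewrite /c2; field.
  apply: (hcone (fun i => lam * c2 i + mu * y1' i) y2' 1 nu) => //.
  by apply: hcone => //; lra.
split => //; split; first exact: (claim z pz (@vdist_refl z del d0)).
by exists del.
Qed.

End Vec.

Lemma coneP_ge0 (R : realType) (chi : 'I_3 -> R -> R)
  (chi_nneg : forall i (t : R), 0 < t -> 0 <= chi i t) p :
  coneP chi p -> forall i, 0 <= p i.
Proof.
move=> [nu [_ e]] i; rewrite e; apply: fine_ge0.
by apply: integral_ge0 => t ht; rewrite lee_fin chi_nneg.
Qed.

Lemma relint_exists (R : realType) (chi : 'I_3 -> R -> R) (M : R)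
  (chi_nneg : forall i (t : R), 0 < t -> 0 <= chi i t)
  (chi_cont : forall i, {in `]0, +oo[, continuous (chi i)})
  (chi_bdd : forall i (t : R), 0 < t -> `|chi i t| <= M) :
  (exists x, interior3 (coneP chi) x) -> exists c, relint (regT chi) c.
Proof.
move=> [x [e e0 hx]].
have comb := @coneP_comb R chi M chi_nneg chi_cont chi_bdd.
have xge : forall i, e / 4 <= x i.
  have : coneP chi (fun i => x i - e / 4).
    apply: hx; apply: coord_vdist => // i.
    rewrite addrAC subrr add0r normrN gtr0_norm; first lra.
    by apply: divr_gt0.
  move/(@coneP_ge0 R chi chi_nneg) => h i; have := h i; lra.
pose s := vsum1 x.
have s0 : 0 < s.
  rewrite /s /vsum1 sum3; have := xge o0; have := xge o1; have := xge o2.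
  have : 0 < e / 4 by apply: divr_gt0.
  lra.
have sn : s != 0 by rewrite gt_eqF.
have scale : forall p, coneP chi p -> coneP chi (fun i => p i / s).
  move=> p hp.
  have -> : (fun i => p i / s) = (fun i => s^-1 * p i + 0 * p i).
    by apply/funext => i; rewrite mul0r addr0 mulrC.
  by apply: comb => //; rewrite invr_ge0 ltW.
exists (fun i => x i / s).
have pc : planeA (fun i => x i / s).
  rewrite /planeA /= /vsum1 -mulr_suml -/(vsum1 x) -/s.
  by rewrite divff.
split => //; split.
  split => //; apply: scale; apply: hx; exact: vdist_refl.
exists (e / (2 * s)); first by apply: divr_gt0 => //; apply: mulr_gt0.
move=> y py dy; split => //.
have -> : y = (fun i => (s * y i) / s).
  by apply/funext => i; field.
apply: scale; apply: hx; apply: coord_vdist => // i.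
have := @vdist_coord R _ _ _ dy i.
have -> : s * y i - x i = s * (y i - x i / s) by field.
rewrite normrM (gtr0_norm s0) => h.
have : s * `|y i - x i / s| <= s * (e / (2 * s)).
  by rewrite ler_pM2l // ltW.
have -> : s * (e / (2 * s)) = e / 2 by field.
done.
Qed.

Lemma e_indep (R : realType) (u v : R) :
  (forall i, u * e1 R i + v * e2 R i = 0) -> u = 0 /\ v = 0.
Proof.
move=> h; have h2 := h o2; have h0 := h o0.
rewrite /e1 /e2 /= in h2 h0.
have s6 : 0 < Num.sqrt (6 : R) by rewrite sqrtr_gt0.
have s2 : 0 < Num.sqrt (2 : R) by rewrite sqrtr_gt0.
have v0 : v = 0.
  have : v * (-2 / Num.sqrt 6) = 0 by rewrite -h2; ring.
  move/eqP; rewrite mulf_eq0 => /orP[/eqP //|].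
  rewrite mulf_eq0 invr_eq0 (gt_eqF s6) orbF => /eqP; lra.
split => //.
have : u * (1 / Num.sqrt 2) = 0 by rewrite -h0 v0; ring.
move/eqP; rewrite mulf_eq0 => /orP[/eqP //|].
by rewrite mul1r invr_eq0 (gt_eqF s2).
Qed.

Lemma seg_in_conv (R : realType) (eta : 'I_3 -> R -> R) (I : set R) (a b t : R) (x : vec R) :
  I a -> I b -> 0 <= t <= 1 -> (forall i, x i = (1 - t) * eta i a + t * eta i b) ->
  convhull (curve_image eta I) x.
Proof.
move=> Ia Ib /andP[t0 t1] hx.
exists 2, (fun k : 'I_2 => if k == ord0 then 1 - t else t),
  (fun k : 'I_2 => if k == ord0 then (fun i => eta i a) else (fun i => eta i b)).
split; first by move=> k; case: ifP => _; lra.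
split; first by rewrite !big_ord_recl big_ord0 /=; ring.
split; first by move=> k; case: ifP => _; [exists a | exists b].
by move=> i; rewrite !big_ord_recl big_ord0 /= hx; ring.
Qed.

Lemma conv_dec (R : realType) (eta : 'I_3 -> R -> R) (I : set R) (x : vec R) :
  convhull (curve_image eta I) x ->
  exists n (w lk : 'I_n -> R), (forall k, 0 <= w k) /\ \sum_(k < n) w k = 1 /\
    (forall k, I (lk k)) /\ forall i, x i = \sum_(k < n) w k * eta i (lk k).
Proof.
move=> [n [w [p [w0 [w1 [hp hx]]]]]].
have : forall k, exists l, I l /\ p k = (fun i => eta i l).
  by move=> k; have [l Il e] := hp k; exists l.
move=> /choice [lk hlk].
exists n, w, lk; split => //; split => //; split; first by move=> k; have [] := hlk k.
move=> i; rewrite hx; apply: eq_bigr => k _; have [_ ->] := hlk k; done.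
Qed.

Lemma itv01 (R : realType) (l : R) : 0 <= l <= 1 -> l \in `[0, 1].
Proof. by rewrite in_itv. Qed.

Theorem lemma3 (R : realType) (chi eta : 'I_3 -> R -> R)
  (chi_nneg : forall i (t : R), 0 < t -> 0 <= chi i t)
  (chi_cont : forall i, {in `]0, +oo[, continuous (chi i)})
  (chi_bdd : exists M : R, forall i (t : R), 0 < t -> `|chi i t| <= M)
  (chi_supp : closure [set t : R | 0 < t /\ exists i, chi i t != 0] = `[0, 1]%classic)
  (chi_nz : forall t : R, 0 < t < 1 -> exists i, chi i t != 0)
  (eta_def : forall i (t : R), 0 < t < 1 ->
     eta i t = chi i t / \sum_(j < 3) chi j t)
  (eta_cont : forall i, {within `[0, 1], continuous (eta i)})
  (P_int : exists x, interior3 (coneP chi) x)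
  (locus_convex : convex_locus eta (regT chi))
  (a b : R) (ha : a \in `[0, 1]) (hb : b \in `[0, 1]) (hab : a < b) :
  convhull (curve_image eta (cyc_interval a b)) `&`
    convhull (curve_image eta (cyc_interval b a))
  = segment (fun i => eta i a) (fun i => eta i b).
Proof.
have [M hM] := chi_bdd.
have comb := @coneP_comb R chi M chi_nneg chi_cont hM.
have [c0 hc0] := @relint_exists R chi M chi_nneg chi_cont hM P_int.
have [hbd hloc] := locus_convex.
have [theta [[_ hrep] [hmon hrng]]] := hloc c0 hc0.
move: ha hb; rewrite !in_itv /= => /andP[a0 a1] /andP[b0 b1].
have : forall l, exists r : R, (0 <= l <= 1) -> 0 < r /\ forall i,
    eta i l - c0 i = r * (cos (theta l) * e1 R i + sin (theta l) * e2 R i).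
  move=> l; case: (boolP (0 <= l <= 1)) => hl.
    have [r r0 hr] := hrep l (@itv01 R _ hl).
    by exists r.
  by exists 1.
move=> /choice [r hr].
have key : exists (s : R) (phi : R -> R), (s = 1 \/ s = -1) /\
   (forall x y, 0 <= x -> x <= y -> y <= 1 -> phi x <= phi y) /\
   phi 1 - phi 0 <= 2 * pi /\
   (forall l, cos (theta l) = cos (phi l) /\ sin (theta l) = s * sin (phi l)).
  have i0 : (0 : R) \in `[0, 1] by rewrite in_itv /= lexx ler01.
  have i1 : (1 : R) \in `[0, 1] by rewrite in_itv /= lexx ler01.
  case: hmon => hm.
  - exists 1, theta; split; first by left.
    split.
      move=> x y x0 xy y1; apply: hm => //; rewrite in_itv /=; apply/andP; split; lra.
    split; last by move=> l; rewrite mul1r.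
    apply: le_trans hrng; rewrite distrC; exact: ler_norm.
  - exists (-1), (fun l => - theta l); split; first by right.
    split.
      move=> x y x0 xy y1; rewrite lerN2; apply: hm => //; rewrite in_itv /=; apply/andP; split; lra.
    split; last by move=> l; rewrite cosN sinN mulN1r opprK.
    apply: le_trans hrng; rewrite opprK addrC; exact: ler_norm.
have [s [phi [hs [hmono [hrange hcs]]]]] := key.
have sn : s != 0 by case: hs => ->; rewrite ?oppr_eq0 oner_eq0.
pose X l := r l * cos (phi l).
pose Y l := r l * sin (phi l).
have hpol : forall l, 0 <= l <= 1 -> 0 < r l /\ X l = r l * cos (phi l) /\ Y l = r l * sin (phi l).
  by move=> l hl; split => //; have [] := hr l hl.
have etaE : forall l, 0 <= l <= 1 -> forall i, eta i l = c0 i + X l * e1 R i + (s * Y l) * e2 R i.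
  move=> l hl i; have [_ e] := hr l hl; have := e i.
  have [ec es] := hcs l; rewrite ec es /X /Y => e'.
  have -> : eta i l = (eta i l - c0 i) + c0 i by ring.
  rewrite e'; ring.
have hH : forall l l1 l2, 0 <= l <= 1 -> 0 <= l1 <= 1 -> 0 <= l2 <= 1 ->
    forall mu nu, 0 <= mu -> 0 <= nu -> mu + nu < 1 ->
    X l = mu * X l1 + nu * X l2 -> Y l = mu * Y l1 + nu * Y l2 -> False.
  move=> l l1 l2 hl hl1 hl2 mu nu m0 n0 mn ex ey.
  have [_ hnint] := hbd l (@itv01 R _ hl).
  apply: hnint.
  have -> : (fun i => eta i l) = (fun i => (1 - mu - nu) * c0 i + mu * eta i l1 + nu * eta i l2).
    by apply/funext => i; rewrite !etaE // ex ey; ring.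
  apply: (@relint_comb R (coneP chi) comb) => //.
  - exact: (hbd l1 (@itv01 R _ hl1)).1.
  - exact: (hbd l2 (@itv01 R _ hl2)).1.
  - lra.
  - ring.
have coord : forall n (w lk : 'I_n -> R), \sum_(k < n) w k = 1 ->
    (forall k, 0 <= lk k <= 1) -> forall i,
    \sum_(k < n) w k * eta i (lk k) =
    c0 i + (\sum_(k < n) w k * X (lk k)) * e1 R i + (s * \sum_(k < n) w k * Y (lk k)) * e2 R i.
  move=> n w lk w1 hl i.
  rewrite (eq_bigr (fun k => e1 R i * (w k * X (lk k)) + (s * e2 R i) * (w k * Y (lk k)) + c0 i * w k)).
    by rewrite sum_lin w1; ring.
  by move=> k _; rewrite etaE //; ring.
have cabE : cyc_interval a b = `[a, b]%classic by rewrite /cyc_interval (ltW hab).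
have cbaE : cyc_interval b a = (`[b, 1] `|` `[0, a])%classic.
  by rewrite /cyc_interval leNgt hab.
have ea : forall i, eta i a = c0 i + X a * e1 R i + (s * Y a) * e2 R i.
  by apply: etaE; apply/andP; split; lra.
have eb : forall i, eta i b = c0 i + X b * e1 R i + (s * Y b) * e2 R i.
  by apply: etaE; apply/andP; split; lra.
apply/seteqP; split.
- move=> x [h1 h2].
  have [n [w [lk [w0 [w1 [hlk hx]]]]]] := @conv_dec R eta _ x h1.
  have [m [v [lj [v0 [v1 [hlj hy]]]]]] := @conv_dec R eta _ x h2.
  rewrite cabE in hlk; rewrite cbaE in hlj.
  have ar1 : forall k, arc1 R a b (lk k).
    by move=> k; have := hlk k; rewrite /= in_itv.
  have ar2 : forall j, arc2 R a b (lj j).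
    move=> j; case: (hlj j) => /=; rewrite in_itv /= => h; [left|right] => //.
  have l01 : forall k, 0 <= lk k <= 1.
    by move=> k; have /andP[u1 u2] := ar1 k; apply/andP; split; lra.
  have l01' : forall j, 0 <= lj j <= 1.
    move=> j; case: (ar2 j) => /andP[u1 u2]; apply/andP; split; lra.
  have eqc : forall i, (\sum_(k < n) w k * X (lk k) - \sum_(j < m) v j * X (lj j)) * e1 R i +
      (s * \sum_(k < n) w k * Y (lk k) - s * \sum_(j < m) v j * Y (lj j)) * e2 R i = 0.
    move=> i; have := hx i; rewrite hy (coord _ _ _ w1 l01) (coord _ _ _ v1 l01') => e.
    lra.
  have [u0 u1] := @e_indep R _ _ eqc.
  have EX : \sum_(k < n) w k * X (lk k) = \sum_(j < m) v j * X (lj j) by lra.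
  have EY : \sum_(k < n) w k * Y (lk k) = \sum_(j < m) v j * Y (lj j).
    apply/(mulfI sn); lra.
  have [t [ht [tx ty]]] := @core_main R X Y r phi a b hpol hmono hrange hH a0 hab b1
    n w lk m v lj w0 w1 ar1 v0 v1 ar2 EX EY.
  exists t; first by rewrite in_itv /=.
  move=> i; rewrite hx (coord _ _ _ w1 l01) tx ty ea eb; ring.
- move=> x [t ht hx].
  rewrite in_itv /= in ht.
  split.
    apply: (@seg_in_conv R eta _ a b t) => //; rewrite cabE /= in_itv /=;
      apply/andP; split; lra.
  apply: (@seg_in_conv R eta _ a b t) => //; rewrite cbaE /=.
    by right; rewrite in_itv /=; apply/andP; split; lra.
  by left; rewrite in_itv /=; apply/andP; split; lra.
Qed.
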